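(* Let $(R,\cdot,\alpha)$ be a weakly unital hom-associative ring with weak unit $e$, and let $\delta$ be a derivation on $R$ with $\alpha\circ\delta=\delta\circ\alpha$. Extend $\alpha$ homogeneously to the differential polynomial ring $R[X;\mathrm{id}_R,\delta]$. Then: (i) $a\cdot\delta^n(e)=\delta^n(e)\cdot a=0$ for all $a\in R$ and $n\in\mathbb{N}_{>0}$; (ii) $e=eX^0$ is a weak unit in $R[X;\mathrm{id}_R,\delta]$, i.e. $e\cdot q=q\cdot e=\alpha(q)$ for all $q\in R[X;\mathrm{id}_R,\delta]$; (iii) for every $q=\sum_{i=0}^nq_iX^i\in R[X;\mathrm{id}_R,\delta]$, $\ eX\cdot q-q\cdot eX=\sum_{i=0}^n\alpha(\delta(q_i))X^i$.
   Context: A hom-associative ring is a triple $(R,\cdot,\alpha)$ where $R$ is an abelian group with a biadditive (not necessarily associative or unital) multiplication and an additive map $\alpha$ with $\alpha(a)\cdot(b\cdot c)=(a\cdot b)\cdot\alpha(c)$ for all $a,b,c$. It is weakly unital with weak unit $e$ if $e\cdot a=a\cdot e=\alpha(a)$ for all $a\in R$. A derivation is an additive map $\delta$ with $\delta(ab)=a\delta(b)+\delta(a)b$. The differential polynomial ring $R[X;\mathrm{id}_R,\delta]$ is the set of formal sums $\sum_{i\in\mathbb{N}}a_iX^i$ ($a_i\in R$, finitely many nonzero) with coefficientwise addition and the distributive multiplication $aX^m\cdot bX^n=\sum_{i=0}^m\binom{m}{i}\big(a\cdot\delta^{m-i}(b)\big)X^{i+n}$; $R$ is identified with $RX^0$,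 and $eX$ denotes the element with coefficient $e$ at $X^1$ and $0$ elsewhere. $\mathbb{N}$ is the non-negative integers, $\mathbb{N}_{>0}$ the positive ones. The homogeneous extension of $\alpha$ is $\alpha\left(\sum_ia_iX^i\right):=\sum_i\alpha(a_i)X^i$. *)

(* Defs.v *)
From HB Require Import structures.
From mathcomp Require Import all_boot all_order all_algebra.
Set Implicit Arguments. Unset Strict Implicit. Unset Printing Implicit Defensive.
Import GRing.Theory.
Local Open Scope ring_scope.

Section DiffPoly.
Variable R : zmodType.

Definition additive_map (f : R -> R) : Prop := forall x y, f (x + y) = f x + f y.

Definition biadditive (mul : R -> R -> R) : Prop :=
  (forall a b c, mul (a + b) c = mul a c + mul b c) /\
  (forall a b c, mul a (b + c) = mul a b + mul a c).

Definition hom_assoc_ring (mul : R -> R -> R) (alpha : R -> R) : Prop :=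
  [/\ biadditive mul, additive_map alpha &
      forall a b c, mul (alpha a) (mul b c) = mul (mul a b) (alpha c)].

Definition weak_unit (mul : R -> R -> R) (alpha : R -> R) (e : R) : Prop :=
  forall a, mul e a = alpha a /\ mul a e = alpha a.

Definition derivation (mul : R -> R -> R) (delta : R -> R) : Prop :=
  additive_map delta /\
  forall a b, delta (mul a b) = mul a (delta b) + mul (delta a) b.

(* Elements of R[X; id_R, delta] are represented by finite coefficient
   sequences p (p`_i is the coefficient of X^i; trailing zeros allowed).
   The coefficient of X^k in the product p * q, where
   aX^m * bX^n = sum_{i=0}^m binom(m,i) (a * delta^(m-i)(b)) X^(i+n). *)
Definition dpmul_coef (mul : R -> R -> R) (delta : R -> R)
    (p q : seq R) (k : nat) : R :=
  \sum_(m < size p) \sum_(n < size q) \sum_(i < m.+1)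
    (if (i + n == k)%N
     then (mul p`_m (iter (m - i) delta q`_n)) *+ 'C(m, i)
     else 0).

Definition dpalpha (alpha : R -> R) (p : seq R) : seq R := map alpha p.

End DiffPoly.

(* Main.v *)
Require Import Defs.
From HB Require Import structures.
From mathcomp Require Import all_boot all_order all_algebra.
From mathcomp Require Import zify.
Import GRing.Theory.
Local Open Scope ring_scope.

Lemma sum_ifeq (R : zmodType) (s j k : nat) (f : nat -> R) :
  \sum_(n < s) (if (n + j == k)%N then f n else 0) =
  if ((j <= k) && (k - j < s))%N then f (k - j)%N else 0.
Proof.
elim: s => [|s IH]; first by rewrite big_ord0 andbF.
rewrite big_ord_recr /= IH.
case: (eqVneq (s + j)%N k) => [<-|ne].
  by rewrite addnK ltnn andbF add0r leq_addl ltnSn.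
rewrite addr0.
have -> : ((j <= k) && (k - j < s.+1))%N = ((j <= k) && (k - j < s))%N.
  move/eqP: ne => ne.
  by apply/idP/idP => /andP[h1 h2]; apply/andP; split; lia.
by [].
Qed.

Lemma sum_ifeq0 (R : zmodType) (s k : nat) (f : nat -> R) :
  \sum_(n < s) (if (nat_of_ord n == k)%N then f n else 0) =
  if (k < s)%N then f k else 0.
Proof.
rewrite (eq_bigr (fun n : 'I_s => if (n + 0 == k)%N then f n else 0));
  last by move=> n _; rewrite addn0.
by rewrite sum_ifeq subn0.
Qed.

Lemma dbl0 (R : zmodType) (x : R) : x = x + x -> x = 0.
Proof. by move=> h; rewrite -(addKr x x) -h addNr. Qed.

Theorem mainTheorem10 (R : zmodType) (mul : R -> R -> R) (alpha delta : R -> R)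
    (e : R)
    (hR : hom_assoc_ring mul alpha) (he : weak_unit mul alpha e)
    (hd : derivation mul delta) (hcomm : forall x, alpha (delta x) = delta (alpha x)) :
  (* (i) *)
  (forall (a : R) (n : nat), (0 < n)%N ->
     mul a (iter n delta e) = 0 /\ mul (iter n delta e) a = 0) /\
  (* (ii) e = eX^0 is a weak unit of R[X; id_R, delta] *)
  (forall (q : seq R) (k : nat),
     dpmul_coef mul delta [:: e] q k = (dpalpha alpha q)`_k /\
     dpmul_coef mul delta q [:: e] k = (dpalpha alpha q)`_k) /\
  (* (iii) eX * q - q * eX = sum alpha(delta q_i) X^i *)
  (forall (q : seq R) (k : nat),
     dpmul_coef mul delta [:: 0; e] q k - dpmul_coef mul delta q [:: 0; e] k
     = alpha (delta q`_k)).
Proof.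
case: hR => [[mD1 mD2] aD assoc]; case: hd => [dD dmul].
have mul0 : forall x, mul 0 x = 0.
  by move=> x; apply: dbl0; rewrite -mD1 addr0.
have mulx0 : forall x, mul x 0 = 0.
  by move=> x; apply: dbl0; rewrite -mD2 addr0.
have d0 : delta 0 = 0.
  by apply: dbl0; rewrite -dD addr0.
have a0 : alpha 0 = 0.
  by apply: dbl0; rewrite -aD addr0.
have id0 : forall n, iter n delta 0 = 0.
  by elim=> [|n IH] //=; rewrite IH d0.
have hi : forall (n : nat), (0 < n)%N -> forall a,
     mul a (iter n delta e) = 0 /\ mul (iter n delta e) a = 0.
  elim=> [//|[|n] IH] _ a.
    have h1 := dmul e a; have h2 := dmul a e.
    rewrite (proj1 (he a)) -hcomm (proj1 (he (delta a))) in h1.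
    rewrite (proj2 (he a)) -hcomm (proj2 (he (delta a))) in h2.
    split; apply: (addrI (alpha (delta a))); rewrite addr0 /=.
      by rewrite addrC -h2.
    by rewrite -h1.
  have [h3 h4] := IH erefl (delta a).
  have [h5 h6] := IH erefl a.
  have h1 := dmul (iter n.+1 delta e) a; have h2 := dmul a (iter n.+1 delta e).
  rewrite h6 d0 h4 add0r in h1; rewrite h5 d0 h3 addr0 in h2.
  by split.
split; first by move=> a n /hi; apply.
have inner : forall (x : R) (m j k : nat),
  \sum_(i < m.+1) (if (i + j == k)%N
     then mul x (iter (m - i) delta e) *+ 'C(m, i) else 0)
  = if (m + j == k)%N then alpha x else 0.
  move=> x m j k; rewrite big_ord_recr /= subnn binn mulr1n (proj2 (he x)).
  rewrite big1 ?add0r // => i _.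
  have hp : (0 < m - i)%N by rewrite subn_gt0.
  by rewrite (proj1 (hi _ hp x)) mul0rn; case: ifP.
split=> q k.
  rewrite /dpmul_coef /dpalpha; split.
    rewrite /= big_ord1 /=.
    under eq_bigr => n _ do rewrite big_ord1 /= add0n mulr1n (proj1 (he _)).
    rewrite (@sum_ifeq0 R (size q) k (fun n => alpha q`_n)).
    case: ltnP => hk; first by rewrite (nth_map 0).
    by rewrite nth_default // size_map.
  rewrite /=.
  under eq_bigr => m _ do rewrite big_ord1 /= inner.
  rewrite (@sum_ifeq R (size q) 0 k (fun n => alpha q`_n)) /= subn0.
  case: ltnP => hk; first by rewrite (nth_map 0).
  by rewrite nth_default // size_map.
rewrite /dpmul_coef /= big_ord_recl big_ord1 /=.
rewrite big1; last first.
  by move=> n _; apply: big1 => i _; rewrite mul0 mul0rn; case: ifP.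
rewrite add0r.
under eq_bigr => n _ do rewrite big_ord_recl big_ord1 /= !add0n.
rewrite big_split /=.
under eq_bigr => n _ do rewrite mulr1n (proj1 (he _)).
rewrite (@sum_ifeq0 R (size q) k (fun n => alpha (delta q`_n))).
rewrite (eq_bigr (fun n : 'I_(size q) => if (n + 1 == k)%N then alpha q`_n else 0));
  last by move=> n _; rewrite /bump /= add1n addn1 binn mulr1n (proj1 (he _)).
under [X in _ - X]eq_bigr => m _ do rewrite big_ord_recl big_ord1 /=.
rewrite [X in _ - X](eq_bigr (fun m : 'I_(size q) => if (m + 1 == k)%N then alpha q`_m else 0)); last first.
  move=> m _; rewrite big1 ?add0r; first by rewrite inner.
  by move=> i _; rewrite id0 mulx0 mul0rn; case: ifP.
rewrite addrK.
case: ltnP => hk //.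
by rewrite nth_default // d0 a0.
Qed.
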